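(* Let $T$ be a basic maximal rigid object of $\mathcal{C}_n$ with top summand $T_1=(1,n-1)$, and let $X\in\mathcal{F}$. If both $\sigma^{\mathcal{T}}_X$ and $\sigma^{\mathcal{D}}_X$ are non-zero strings, then there is a $\mathcal{D}$-arrow $\beta_X$ in the quiver of $\Lambda_T$ from the end vertex of $\sigma^{\mathcal{T}}_X$ to the end vertex of $\sigma^{\mathcal{D}}_X$; in particular $(\sigma^{\mathcal{D}}_X)^{-1}\beta_X\sigma^{\mathcal{T}}_X$ is a well-defined string.
   Context: Let $k$ be algebraically closed, $n\ge2$, $\mathcal{T}_n$ the tube of rank $n$ (finite-dimensional nilpotent representations of the cyclically oriented $\tilde A_{n-1}$-quiver; AR-translation $\tau$), $\mathcal{C}_n=D^b(\mathcal{T}_n)/\tau^{-1}[1]$ the cluster tube, with indecomposables identified with those of $\mathcal{T}_n$. Indecomposables have coordinates $(a,b)$, $a\in\mathbb{Z}/n$ (represented in $\{1,\dots,n\}$), $b\ge1$ the quasilength, with $\tau(a,b)=(a-1,b)$ and irreducible maps $(a,b)\to(a,b+1)$, $(a,b)\to(a+1,b-1)$. For indecomposables $X,Y$, $\operatorname{Hom}_{\mathcal{C}_n}(X,Y)=\operatorname{Hom}_{\mathcal{T}_n}(X,Y)\oplus\operatorname{Hom}_{D^b}(X,\tau^{-1}Y[1])$; elements of the first summand are $\mathcal{T}$-maps, of the second $\mathcal{D}$-maps. $R^{\mathcal{T}}(X)$ (resp. $R^{\mathcal{D}}(X)$) is the set of indecomposables with a nonzero $\mathcal{T}$-map (resp.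 $\mathcal{D}$-map) to $X$. $T=\bigoplus_{i=1}^{n-1}T_i$ is basic maximal rigid ($\operatorname{Ext}^1(T,T)=0$ and $\operatorname{Ext}^1(T\oplus Z,T\oplus Z)=0\Rightarrow Z\in\operatorname{add}T$); its unique summand of quasilength $n-1$ (top summand) is, by choice of coordinates, $T_1=(1,n-1)$. $\mathcal{F}$ is the set of indecomposables $(a,b)$, $a\in\{1,\dots,n\}$, with $b\le n-1$ or $a+b\le2n-1$. The quiver of $\Lambda_T=\operatorname{End}_{\mathcal{C}_n}(T)^{\mathrm{op}}$ has a vertex for each $T_i$ and arrows $i\to j$ for maps $T_j\to T_i$ irreducible in $\operatorname{add}T$; the arrow is a $\mathcal{D}$-arrow if that map is a $\mathcal{D}$-map. A string is a trivial string at a vertex, or a word in arrows and formal inverses with matching endpoints, no letter followed by its inverse, and no subword of it or its inverse a zero relation of $\Lambda_T$. For $*\in\{\mathcal{T},\mathcal{D}\}$: if $R^*(X)\cap\operatorname{add}T\neq\emptyset$, $\sigma^*_X$ denotes the unique string that traverses exactly the vertices of the summands of $T$ in $R^*(X)$, each exactly once, and ends at the vertex of the one of highest quasilength; otherwise $\sigma^*_X$ is the zero string. *)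

(* Defs.v *)
From Stdlib Require List.
From mathcomp Require Import all_boot.
Set Implicit Arguments. Unset Strict Implicit. Unset Printing Implicit Defensive.

(* Indecomposables (a,b): a in Z/n represented in {1..n}, b >= 1 quasilength *)
Definition obj := (nat * nat)%type.
Definition valid_obj (n : nat) (X : obj) : bool := (1 <= X.1 <= n) && (0 < X.2).

Definition tau (n : nat) (X : obj) : obj :=
  (if X.1 <= 1 then n else X.1.-1, X.2).

(* Model of the tube: (a,b) is the uniserial nilpotent representation with
   composition factors (from socle up) a, a+1, ..., a+b-1 (mod n); its
   submodule of length l is (a,l), its quotient of length l is (a+b-l,l).
   Hom_T(X,Y) has the basis {f_l} where f_l : X ->> (quotient of length l)
   = (submodule of length l) >-> Y, i.e. indices l with 1 <= l <= min(b_X,b_Y)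
   and a_X + b_X - l = a_Y (mod n). *)
Definition homT_idx (n : nat) (X Y : obj) (l : nat) : bool :=
  [&& 1 <= l, l <= minn X.2 Y.2 & X.1 + X.2 == Y.1 + l %[mod n]].

(* D-maps X -> Y : Hom_{D^b}(X, tau^-1 Y [1]) = Ext^1_T(X, tau^-1 Y)
   = D Hom_T(Y, tau^2 X) (AR duality); basis = dual basis of Hom_T(Y,tau^2 X). *)
Definition homD_idx (n : nat) (X Y : obj) (m : nat) : bool :=
  homT_idx n Y (tau n (tau n X)) m.

(* basis morphisms of Hom_C(X,Y) = Hom_T(X,Y) (+) Hom_D(X, tau^-1 Y[1]) *)
Inductive kind := KT | KD.
Definition kind_eqb (k k' : kind) : bool :=
  match k, k' with KT, KT | KD, KD => true | _, _ => false end.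
Definition mor := (kind * nat)%type.

Definition valid_mor (n : nat) (X Y : obj) (f : mor) : bool :=
  match f.1 with KT => homT_idx n X Y f.2 | KD => homD_idx n X Y f.2 end.

(* Composition g o f of basis morphisms f : X -> Y, g : Y -> Z.  It is a
   nonzero multiple of a basis morphism, or zero (None).
   - T o T : f_l then g_m gives the T-basis element of index l+m-b_Y (if >0);
   - T-map h_l : Y -> Z after D-map d_m : X -> Y gives d_(m+b_Z-l)
     (transpose of precomposition with h_l on Hom_T(-,tau^2 X));
   - D-map d_m : Y -> Z after T-map h_l : X -> Y gives d_(m+b_X-l)
     (transpose of postcomposition with tau^2 h_l);
   - D o D = 0 (hereditary). *)
Definition comp (n : nat) (X Y Z : obj) (f g : mor) : option mor :=
  match f, g with
  | (KT, l), (KT, m) => if Y.2 < l + m then Some (KT, l + m - Y.2) else None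
  | (KD, m), (KT, l) =>
      if homD_idx n X Z (m + Z.2 - l) then Some (KD, m + Z.2 - l) else None
  | (KT, l), (KD, m) =>
      if homD_idx n X Z (m + X.2 - l) then Some (KD, m + X.2 - l) else None
  | (KD, _), (KD, _) => None
  end.

Definition rad_mor (n : nat) (X Y : obj) (f : mor) : Prop :=
  valid_mor n X Y f /\ ~ (X = Y /\ f = (KT, X.2)).

(* Ext^1_C(X,Y) = Ext^1_T(X,Y) (+) Hom_T(X, tau Y), and
   Ext^1_T(X,Y) = D Hom_T(Y, tau X). *)
Definition extC_zero (n : nat) (X Y : obj) : Prop :=
  (forall l, ~~ homT_idx n Y (tau n X) l) /\ (forall l, ~~ homT_idx n X (tau n Y) l).

(* objects of C_n = finite lists of indecomposables (direct sums) *)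
Definition rigid (n : nat) (S : seq obj) : Prop :=
  forall X Y, X \in S -> Y \in S -> extC_zero n X Y.

Definition basic_maximal_rigid (n : nat) (T : seq obj) : Prop :=
  [/\ size T = n.-1, uniq T, all (valid_obj n) T, rigid n T &
      forall Z : seq obj, all (valid_obj n) Z -> rigid n (T ++ Z) ->
        all (fun Y => Y \in T) Z].

Definition inF (n : nat) (X : obj) : Prop :=
  valid_obj n X /\ (X.2 <= n.-1 \/ X.1 + X.2 <= 2 * n - 1).

Definition inRT (n : nat) (X Y : obj) : Prop := exists l, homT_idx n Y X l.
Definition inRD (n : nat) (X Y : obj) : Prop := exists m, homD_idx n Y X m.

(* Quiver of Lambda_T = End_C(T)^op: vertices = summands of T; an arrow
   i -> j for each basis morphism T_j -> T_i of the radical of add T not in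
   rad^2 (composites of basis morphisms being basis morphisms or zero). *)
Record arrow := Arrow { asrc : obj; atgt : obj; amor : mor }.

Definition irr_addT (n : nat) (T : seq obj) (X Y : obj) (f : mor) : Prop :=
  [/\ X \in T, Y \in T, rad_mor n X Y f &
      ~ exists Z g h, [/\ Z \in T, rad_mor n X Z g, rad_mor n Z Y h &
                          comp n X Z Y g h = Some f]].

Definition is_arrow (n : nat) (T : seq obj) (a : arrow) : Prop :=
  irr_addT n T (atgt a) (asrc a) (amor a).

Definition is_Darrow (n : nat) (T : seq obj) (a : arrow) : Prop :=
  is_arrow n T a /\ (amor a).1 = KD.

(* composite of a path a_1 a_2 ... a_r (a_t : i_(t-1) -> i_t), i.e. of the
   map T_(i_r) -> T_(i_0); returns (T_(i_r), map) or None if zero. *)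
Fixpoint pcomp (n : nat) (p : seq arrow) : option (obj * mor) :=
  match p with
  | [::] => None
  | [:: a] => Some (atgt a, amor a)
  | a :: p' =>
      match pcomp n p' with
      | Some (e, g) =>
          match comp n e (atgt a) (asrc a) g (amor a) with
          | Some h => Some (e, h)
          | None => None
          end
      | None => None
      end
  end.

Fixpoint is_path (p : seq arrow) : Prop :=
  match p with
  | a :: ((b :: _) as p') => atgt a = asrc b /\ is_path p'
  | _ => True
  end.

Definition all_arrows (n : nat) (T : seq obj) (p : seq arrow) : Prop :=
  forall a, List.In a p -> is_arrow n T a.

Definition zero_relation (n : nat) (T : seq obj) (p : seq arrow) : Prop :=
  [/\ 2 <= size p, all_arrows n T p, is_path p & pcomp n p = None].

(* Words/strings, represented as walks: a start vertex and a list of letters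
   (arrow, true) = the arrow, (arrow, false) = its formal inverse.  The walk
   traverses the letters in order (so the paper's word u_k ... u_1, written
   in composition order, is the list [:: u_1; ...; u_k]). *)
Definition letter := (arrow * bool)%type.
Definition dummy_letter : letter := (Arrow (0,0) (0,0) (KT,0), true).
Definition lnth (l : seq letter) (i : nat) : letter := List.nth i l dummy_letter.
Definition lsrc (x : letter) : obj := if x.2 then asrc x.1 else atgt x.1.
Definition ltgt (x : letter) : obj := if x.2 then atgt x.1 else asrc x.1.
Definition walk := (obj * seq letter)%type.

Fixpoint walk_from (v : obj) (w : seq letter) : Prop :=
  match w with
  | [::] => True
  | x :: w' => lsrc x = v /\ walk_from (ltgt x) w'
  end.

Definition wverts (s : walk) : seq obj := s.1 :: map ltgt s.2.
Definition wend (s : walk) : obj := last s.1 (map ltgt s.2).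

Definition winv (s : walk) : walk :=
  (wend s, map (fun x : letter => (x.1, ~~ x.2)) (rev s.2)).

Definition is_string (n : nat) (T : seq obj) (s : walk) : Prop :=
  [/\ s.1 \in T,
      walk_from s.1 s.2,
      (forall x, List.In x s.2 -> is_arrow n T x.1),
      (forall i, i.+1 < size s.2 ->
         ~ ((lnth s.2 i).1 = (lnth s.2 i.+1).1 /\ (lnth s.2 i).2 <> (lnth s.2 i.+1).2))
    &
      (forall i k, let u := take k (drop i s.2) in
         (all snd u -> ~ zero_relation n T (map fst u)) /\
         (all (fun x : letter => ~~ x.2) u -> ~ zero_relation n T (rev (map fst u))))].

Definition is_sigma (n : nat) (T : seq obj) (R : obj -> Prop) (s : walk) : Prop :=
  [/\ is_string n T s,
      uniq (wverts s),
      (forall Y, Y \in wverts s <-> (Y \in T /\ R Y))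
    & (forall Y, Y \in T -> R Y -> Y.2 <= (wend s).2)].

(* Main.v *)
Require Import Defs.
From mathcomp Require Import all_boot zify.
Set Implicit Arguments. Unset Strict Implicit.

Lemma modE3 n p q : p = q %[mod n] -> 0 < n -> p < 3 * n -> q < 3 * n ->
  p = q \/ p = q + n \/ q = p + n \/ p = q + 2 * n \/ q = p + 2 * n.
Proof.
move=> e n0 hp hq.
have hp' : p %/ n < 3 by rewrite ltn_divLR.
have hq' : q %/ n < 3 by rewrite ltn_divLR.
have := divn_eq p n; have := divn_eq q n.
move: e hp' hq'.
case: (p %/ n) => [|[|[|k]]]; case: (q %/ n) => [|[|[|k']]] //= ; lia.
Qed.

Definition wing n (Y : obj) := [/\ 1 <= Y.1, 1 <= Y.2 & Y.1 + Y.2 <= n].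

Lemma homT_wing n Y Z l : 2 <= n -> wing n Y -> wing n Z -> homT_idx n Y Z l ->
  [/\ Y.1 <= Z.1, Z.1 < Y.1 + Y.2, Y.1 + Y.2 <= Z.1 + Z.2 & l = Y.1 + Y.2 - Z.1].
Proof.
case: Y => a b; case: Z => a' b' n2 [/= h1 h2 h3] [/= h4 h5 h6].
rewrite /homT_idx /= => /and3P [l1 l2 /eqP e].
have := modE3 e => H; (try split); lia.
Qed.

Lemma homT_intro n Y Z : Y.1 <= Z.1 -> Z.1 < Y.1 + Y.2 -> Y.1 + Y.2 <= Z.1 + Z.2 ->
  homT_idx n Y Z (Y.1 + Y.2 - Z.1).
Proof.
case: Y => a b; case: Z => a' b' /= h1 h2 h3.
rewrite /homT_idx /=; apply/and3P; split; first lia; first lia.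
by apply/eqP; congr (_ %% _); lia.
Qed.

Lemma tau2E n Y : 2 <= n -> 1 <= Y.1 -> tau n (tau n Y) =
  (if Y.1 == 1 then n.-1 else if Y.1 == 2 then n else Y.1 - 2, Y.2).
Proof.
case: Y => a b /= n2; rewrite /tau /=.
case: a => [|[|[|a]]] //= _.
all: try by case: n n2 => [|[|n]].
all: by rewrite subn2.
Qed.

Lemma homD_wing n Y Z m : 2 <= n -> wing n Y -> wing n Z -> homD_idx n Y Z m ->
  (3 <= Y.1 /\ Z.1 + 2 <= Y.1 /\ Y.1 <= Z.1 + Z.2 + 1 /\ Z.1 + Z.2 + 2 <= Y.1 + Y.2
    /\ m = Z.1 + Z.2 + 2 - Y.1) \/ (Y.1 = 1 /\ Z.1 + Z.2 = n /\ m = 1).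
Proof.
move=> n2 hY hZ; rewrite /homD_idx tau2E //; last by case: hY.
case: Y hY => a b; case: Z hZ => a' b' [/= h1 h2 h3] [/= h4 h5 h6].
rewrite /homT_idx /= => /and3P [l1 l2 /eqP e].
case: eqP e => [->|a1] e.
  have := modE3 e => H; (try split); lia.
case: eqP e => [->|a2] e.
  have := modE3 e => H; (try split); lia.
have := modE3 e => H; (try split); lia.
Qed.

Definition cross (X Y : obj) :=
  [/\ 2 <= X.1, Y.1 < X.1, X.1 <= Y.1 + Y.2 & Y.1 + Y.2 + 1 <= X.1 + X.2].

Lemma ext_sym n X Y : extC_zero n X Y -> extC_zero n Y X.
Proof. by case. Qed.

Lemma cross_ext n X Y : extC_zero n X Y -> cross X Y -> False.
Proof.
case: X => a b; case: Y => a' b' [H _] [/= h1 h2 h3 h4].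
have := H (a' + b' - a.-1); rewrite /homT_idx /tau /=.
have -> : (a <= 1) = false by lia.
have -> : (a' + b' == a.-1 + (a' + b' - a.-1) %[mod n]) = true.
  by apply/eqP; congr (_ %% _); lia.
rewrite andbT; move/negP; apply; apply/andP; split; lia.
Qed.

Lemma ext_intro n X Y : 2 <= n -> wing n X -> wing n Y -> ~ cross X Y -> ~ cross Y X ->
  extC_zero n X Y.
Proof.
move=> n2 hX hY c1 c2.
have key : forall X Y, wing n X -> wing n Y -> ~ cross X Y ->
    forall l, ~~ homT_idx n Y (tau n X) l.
  move=> [a b] [a' b'] [/= h1 h2 h3] [/= h4 h5 h6] cr l; apply/negP.
  rewrite /homT_idx /tau /= => /and3P [l1 l2 /eqP e].
  case: ifP e => ha e.
    have := modE3 e => H; lia.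
  have := modE3 e => H; apply: cr; split => /=; lia.
split; [exact: key | exact: key].
Qed.

Lemma nest n Y Z p : extC_zero n Y Z -> wing n Y -> wing n Z ->
  Y.1 <= p < Y.1 + Y.2 -> Z.1 <= p < Z.1 + Z.2 ->
  (Y.1 <= Z.1 /\ Z.1 + Z.2 <= Y.1 + Y.2) \/ (Z.1 <= Y.1 /\ Y.1 + Y.2 <= Z.1 + Z.2).
Proof.
move=> e [h1 h2 h3] [h4 h5 h6] hp hq.
case: (ltngtP Y.1 Z.1) => c1.
- case: (leqP (Z.1 + Z.2) (Y.1 + Y.2)) => c2; first by left; lia.
  exfalso; have := cross_ext (ext_sym e); apply; split; lia.
- case: (leqP (Y.1 + Y.2) (Z.1 + Z.2)) => c2; first by right; lia.
  exfalso; have := cross_ext e; apply; split; lia.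
- lia.
Qed.

Lemma wing_T n T Y : 2 <= n -> (1, n.-1) \in T -> all (valid_obj n) T -> rigid n T ->
  Y \in T -> wing n Y.
Proof.
move=> n2 T1 hv hr hY.
have /andP [/andP [y1 y2] y3] := allP hv _ hY.
have hb : Y.2 <= n.-1.
  case: (leqP Y.2 n.-1) => // c.
  have [H _] := hr _ _ hY hY.
  have := H (Y.2.+1 - n); rewrite /homT_idx /tau.
  case: ifP => ha /=.
    have -> : (Y.1 + Y.2 == n + (Y.2.+1 - n) %[mod n]) = true.
      by apply/eqP; congr (_ %% _); lia.
    rewrite andbT => /negP []; apply/andP; split; lia.
  have -> : (Y.1 + Y.2 == Y.1.-1 + (Y.2.+1 - n) %[mod n]) = true.
    apply/eqP; rewrite -(modnDr (Y.1.-1 + (Y.2.+1 - n))); congr (_ %% _); lia.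
  rewrite andbT => /negP []; apply/andP; split; lia.
split => //.
case: (leqP (Y.1 + Y.2) n) => // c.
have [_ H] := hr _ _ hY T1.
have := H (Y.1 + Y.2 - n); rewrite /homT_idx /tau /=.

have -> : (Y.1 + Y.2 == n + (Y.1 + Y.2 - n) %[mod n]) = true.
  by apply/eqP; congr (_ %% _); lia.
rewrite andbT => /negP []; apply/andP; split; lia.
Qed.

Lemma inRT_iff n X Y : 2 <= n -> wing n Y -> 1 <= X.1 <= n -> X.1 + X.2 <= 2 * n ->
  inRT n X Y <-> (Y.1 <= X.1 < Y.1 + Y.2 /\ Y.1 + Y.2 <= X.1 + X.2).
Proof.
case: Y => a b; case: X => x c /= n2 [/= h1 h2 h3] hx hc; split.
  case=> l; rewrite /homT_idx /= => /and3P [l1 l2 /eqP e].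
  have := modE3 e => H; lia.
move=> H; exists (a + b - x); rewrite /homT_idx /=; apply/and3P; split; try lia.
by apply/eqP; congr (_ %% _); lia.
Qed.

Lemma inRD_iff2 n X Y : 2 <= n -> wing n Y -> 1 <= X.1 -> 1 <= X.2 -> X.1 + X.2 < n ->
  inRD n X Y <-> (X.1 + 2 <= Y.1 <= X.1 + X.2 + 1 /\ X.1 + X.2 + 2 <= Y.1 + Y.2).
Proof.
move=> n2 hY hx hc hs; split.
  case=> m; rewrite /homD_idx tau2E //; last by case: hY.
  case: Y hY => a b; case: X hx hc hs => x c /= hx hc hs [/= h1 h2 h3].
  rewrite /homT_idx /= => /and3P [l1 l2 /eqP e].
  case: eqP e => [->|a1] e; first by have := modE3 e => H; lia.
  case: eqP e => [->|a2] e; first by have := modE3 e => H; lia.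
  have := modE3 e => H; lia.
move=> H; exists (X.1 + X.2 + 2 - Y.1); rewrite /homD_idx tau2E //; last by case: hY.
case: Y hY H => a b; case: X hx hc hs => x c /= hx hc hs [/= h1 h2 h3] H.
have -> : (a == 1) = false by apply/eqP; lia.
have -> : (a == 2) = false by apply/eqP; lia.
rewrite /homT_idx /=; apply/and3P; split; try lia.
by apply/eqP; congr (_ %% _); lia.
Qed.

Lemma inRD_fwd1 n X Y : 2 <= n -> wing n Y -> 1 <= X.1 <= n -> X.1 + X.2 < 2 * n ->
  n <= X.1 + X.2 -> inRD n X Y -> Y.1 <= X.1 + X.2 - n + 1 < Y.1 + Y.2.
Proof.
move=> n2 hY hx hc hs [m]; rewrite /homD_idx tau2E //; last by case: hY.
case: Y hY => a b; case: X hx hc hs => x c /= hx hc hs [/= h1 h2 h3].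
rewrite /homT_idx /= => /and3P [l1 l2 /eqP e].
case: eqP e => [->|a1] e; first by have := modE3 e => H; lia.
case: eqP e => [->|a2] e; first by have := modE3 e => H; lia.
have := modE3 e => H; lia.
Qed.

Lemma inRD_T1 n X : 2 <= n -> 1 <= X.1 < n -> n <= X.1 + X.2 -> X.1 + X.2 + 2 <= 2 * n ->
  inRD n X (1, n.-1).
Proof.
move=> n2 hx h1 h2; exists (X.1 + X.2 - n + 1); rewrite /homD_idx tau2E //=.
rewrite /homT_idx /=; apply/and3P; split; try lia.
by apply/eqP; congr (_ %% _); lia.
Qed.

Definition flip (x : letter) : letter := (x.1, ~~ x.2).

Lemma winvE (s : walk) : (winv s).2 = map flip (rev s.2).
Proof. by []. Qed.

Lemma ltgt_flip x : ltgt (flip x) = lsrc x.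
Proof. by case: x => a []. Qed.
Lemma lsrc_flip x : lsrc (flip x) = ltgt x.
Proof. by case: x => a []. Qed.

Lemma walk_cat v w1 w2 :
  walk_from v (w1 ++ w2) <-> walk_from v w1 /\ walk_from (last v (map ltgt w1)) w2.
Proof.
elim: w1 v => [|x w1 IH] v /=; first by split => // [[]].
rewrite IH; split; [by case=> ? [] | by case=> [[]]].
Qed.

Lemma walk_rcons v w x :
  walk_from v (rcons w x) <-> walk_from v w /\ lsrc x = last v (map ltgt w).
Proof.
rewrite -cats1 walk_cat /=; split; by case=> ? [].
Qed.

Lemma walk_winv v w : walk_from v w ->
  walk_from (last v (map ltgt w)) (map flip (rev w)).
Proof.
elim/last_ind: w => [|w x IH] //.
move/walk_rcons => [hw hx].
rewrite rev_rcons map_rcons last_rcons /=; split; first by rewrite lsrc_flip.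
by rewrite ltgt_flip hx; apply: IH.
Qed.

Lemma In_mem (T : Type) (U : eqType) (f : T -> U) x l : List.In x l -> f x \in map f l.
Proof.
elim: l => [|y l IH] //= [->|h]; first by rewrite mem_head.
by rewrite in_cons IH ?orbT.
Qed.

Lemma mem_In (T : Type) (U : eqType) (f : T -> U) y l : y \in map f l -> exists x, List.In x l /\ f x = y.
Proof.
elim: l => [|x l IH] //=; rewrite in_cons => /orP [/eqP ->|h]; first by exists x; split; [left|].
by case: (IH h) => z [hz e]; exists z; split; [right|].
Qed.

Lemma In_rcons (T : Type) (x y : T) s : List.In x (rcons s y) <-> List.In x s \/ y = x.
Proof.
rewrite -cats1 List.in_app_iff /=; split; [case=> [h|[h|[]]]; tauto | case; tauto].
Qed.

Lemma In_rev (T : Type) (x : T) l : List.In x (rev l) <-> List.In x l.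
Proof.
elim: l => [|y l IH] //; rewrite rev_cons In_rcons IH /=; tauto.
Qed.

Lemma In_map_flip x l : List.In x (map flip l) -> exists y, List.In y l /\ x = flip y.
Proof.
elim: l => [|y l IH] //= [<-|h]; first by exists y; split; [left|].
by case: (IH h) => z [hz e]; exists z; split; [right|].
Qed.

Lemma lsrc_mem v w x : walk_from v w -> List.In x w -> lsrc x \in v :: map ltgt w.
Proof.
elim: w v => [|y w IH] v //= [e hw] [<-|h]; first by rewrite e mem_head.
by rewrite in_cons IH ?orbT.
Qed.

Lemma ltgt_mem v w x : List.In x w -> ltgt x \in v :: map ltgt w.
Proof. by move=> h; rewrite in_cons In_mem ?orbT. Qed.

Lemma noloop v w x : walk_from v w -> uniq (v :: map ltgt w) -> List.In x w ->
  lsrc x <> ltgt x.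
Proof.
elim: w v => [|y w IH] v //= [e hw] /andP [hv hu] [<-|h].
  by rewrite e => E; move: hv; rewrite in_cons E eqxx.
exact: (IH _ hw hu h).
Qed.

Lemma lnthE l i : lnth l i = nth dummy_letter l i.
Proof. by elim: l i => [|x l IH] [|i] //=; rewrite /lnth /= -IH. Qed.

Lemma drop_take_gen (T : Type) j m (l : seq T) : drop j (take m l) = take (m - j) (drop j l).
Proof.
case: (leqP j m) => h.
  by rewrite take_drop subnK.
have -> : m - j = 0 by lia.
rewrite take0 drop_oversize //.
rewrite size_take_min; lia.
Qed.

Lemma take_drop_rev (T : Type) k i (l : seq T) :
  exists i' k', take k (drop i (rev l)) = rev (take k' (drop i' l)).
Proof.
rewrite drop_rev take_rev drop_take_gen; eexists; eexists; reflexivity.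
Qed.

Lemma is_string_winv n T s : is_string n T s -> wend s \in T -> is_string n T (winv s).
Proof.
case=> h1 h2 h3 h4 h5 hw; rewrite /is_string; split.
- exact: hw.
- rewrite winvE; exact: walk_winv h2.
- move=> x; rewrite winvE => /In_map_flip [y [/In_rev hy ->]]; exact: (h3 _ hy).
- rewrite winvE size_map size_rev => i hi; rewrite !lnthE.
  rewrite !(nth_map dummy_letter) ?size_rev; try lia.
  rewrite !nth_rev; try lia.
  have := h4 (size s.2 - i.+2); rewrite !lnthE.
  have -> : (size s.2 - i.+2).+1 = size s.2 - i.+1 by lia.
  move=> H [e1 e2]; apply: H; first lia.
  split; first by move: e1 => /= ->.
  by move=> E; apply: e2; rewrite /= E.
- move=> i k /=; rewrite -map_drop -map_take.
  have [i' [k' ->]] := take_drop_rev k i s.2.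
  have [H1 H2] := h5 i' k'.
  set v := take k' (drop i' s.2) in H1 H2 *.
  have fe : map fst (map flip (rev v)) = rev (map fst v).
    by rewrite -map_comp map_rev.
  rewrite fe revK; split.
  + rewrite all_map all_rev => h; apply: H2.
    by apply: sub_all h => x /=.
  + rewrite all_map all_rev => h; apply: H1.
    by apply: sub_all h => x /=; rewrite negbK.
Qed.

Lemma pcomp_cons n a p : p <> [::] -> Defs.pcomp n (a :: p) =
  match Defs.pcomp n p with
  | Some (e, g) => match Defs.comp n e (atgt a) (asrc a) g (amor a) with
                   | Some h => Some (e, h) | None => None end
  | None => None end.
Proof. by case: p. Qed.

Lemma pcomp_R n (PD : obj -> Prop) (Q : seq arrow) : Q <> [::] ->
  (forall y, List.In y Q -> [/\ amor y = (KT, (atgt y).2), PD (atgt y) & 0 < (atgt y).2]) ->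
  exists e, [/\ Defs.pcomp n Q = Some (e, (KT, e.2)), PD e & 0 < e.2].
Proof.
elim: Q => [|y Q IH] // _ H.
case: Q IH H => [|y' Q] IH H.
  have [e1 e2 e3] := H y (or_introl erefl).
  by exists (atgt y); rewrite /= e1.
have [e [p1 p2 p3]] := IH ltac:(by []) (fun z hz => H z (or_intror hz)).
have [e1 e2 e3] := H y (or_introl erefl).
exists e; split => //.
rewrite pcomp_cons // p1 e1 /=.
have -> : (atgt y).2 < e.2 + (atgt y).2 by lia.
by rewrite addnK.
Qed.

Lemma pcomp_LR n (PC PD : obj -> Prop) A B beta (P Q : seq arrow) :
  atgt beta = B -> asrc beta = A -> amor beta = (KD, 1) ->
  (forall y, List.In y Q -> [/\ amor y = (KT, (atgt y).2), PD (atgt y) & 0 < (atgt y).2]) ->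
  (forall x, List.In x P -> amor x = (KT, (asrc x).2) /\ PC (asrc x)) ->
  (forall D C, D = B \/ PD D -> C = A \/ PC C -> homD_idx n D C 1) ->
  exists e, Defs.pcomp n (P ++ beta :: Q) = Some (e, (KD, 1)) /\ (e = B \/ PD e).
Proof.
move=> hb ha hm HQ HP HD.
have base : exists e, Defs.pcomp n (beta :: Q) = Some (e, (KD, 1)) /\ (e = B \/ PD e).
  case: Q HQ => [|y Q] HQ.
    by exists B; rewrite /= hm hb; split => //; left.
  have [e [p1 p2 p3]] := pcomp_R (PD := PD) n (Q := y :: Q) ltac:(by []) HQ.
  exists e; split; last by right.
  rewrite pcomp_cons // p1 hm /= ha.
  by rewrite addnK (HD e A (or_intror p2) (or_introl erefl)).
elim: P HP => [|x P IH] HP //.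
have [e [p1 p2]] := IH (fun z hz => HP z (or_intror hz)).
have [x1 x2] := HP x (or_introl erefl).
exists e; split => //.
rewrite cat_cons pcomp_cons; last by case: P {IH HP p1}.
rewrite p1 x1 /= addnK (HD e (asrc x) p2 (or_intror x2)) //.
Qed.

Lemma drop_cat_le (T : Type) i (s1 s2 : seq T) : i <= size s1 -> drop i (s1 ++ s2) = drop i s1 ++ s2.
Proof.
move=> h; rewrite drop_cat; case: ltnP => h' //.
have -> : i = size s1 by lia.
by rewrite subnn drop0 drop_size.
Qed.

Lemma take_cat_le (T : Type) k (s1 s2 : seq T) : k <= size s1 -> take k (s1 ++ s2) = take k s1.
Proof.
move=> h; rewrite take_cat; case: ltnP => h' //.
have -> : k = size s1 by lia.
by rewrite subnn take0 cats0 take_size.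
Qed.

Lemma In_map_fst (x : arrow) (l : seq letter) : List.In x (map fst l) -> exists y, List.In y l /\ y.1 = x.
Proof.
elim: l => [|y l IH] //= [<-|h]; first by exists y; split; [left|].
by case: (IH h) => z [hz e]; exists z; split; [right|].
Qed.

Lemma In_nth (T : Type) (d : T) l i : i < size l -> List.In (nth d l i) l.
Proof.
elim: l i => [|x l IH] [|i] //= h; [by left | right; exact: IH].
Qed.

Lemma concat_string n T (s : walk) (W : seq letter) beta B (PC PD : obj -> Prop) :
  is_string n T s -> is_string n T (B, W) ->
  is_arrow n T beta -> asrc beta = wend s -> atgt beta = B -> amor beta = (KD, 1) ->
  ~ List.In (beta, false) s.2 -> ~ List.In (beta, false) W ->
  (forall i, all snd (drop i s.2) -> forall x, List.In x (drop i s.2) ->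
     amor x.1 = (KT, (asrc x.1).2) /\ PC (asrc x.1)) ->
  (forall k, all snd (take k W) -> forall y, List.In y (take k W) ->
     [/\ amor y.1 = (KT, (atgt y.1).2), PD (atgt y.1) & 0 < (atgt y.1).2]) ->
  (forall D C, D = B \/ PD D -> C = wend s \/ PC C -> homD_idx n D C 1) ->
  is_string n T (s.1, s.2 ++ (beta, true) :: W).
Proof.
case=> s1 s2 s3 s4 s5 [_ w2 w3 w4 w5] hb ha hB hm nS nW GL GR HD.
rewrite /is_string /=; split => //.
- apply/walk_cat; split => //=; split; first exact: ha.
  by rewrite /ltgt /= hB.
- move=> x /List.in_app_iff [h|[<-|h]]; [exact: s3 | exact: hb | exact: w3].
- move=> i; rewrite size_cat /= => hi; rewrite !lnthE !nth_cat.
  case: (ltnP i.+1 (size s.2)) => c1.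
    have -> : i < size s.2 by lia.
    by have := s4 i c1; rewrite !lnthE.
  case: (ltnP i (size s.2)) => c2.
    have -> : i.+1 - size s.2 = 0 by lia.
    move=> /= [e1 e2]; apply: nS.
    have hin : List.In (nth dummy_letter s.2 i) s.2 by apply: In_nth.
    move: hin; case: (nth dummy_letter s.2 i) e1 e2 => a b /= -> e2.
    by case: b e2.
  case: (ltnP (size s.2) i) => c3.
    have -> : i - size s.2 = (i - size s.2).-1.+1 by lia.
    have -> : i.+1 - size s.2 = (i - size s.2).-1.+2 by lia.
    rewrite /=; have := w4 (i - size s.2).-1; rewrite /= !lnthE; apply; lia.
  have -> : i - size s.2 = 0 by lia.
  have -> : i.+1 - size s.2 = 1 by lia.
  rewrite /= => [[e1 e2]]; apply: nW.
  have hin : List.In (nth dummy_letter W 0) W by apply: In_nth; lia.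
  move: hin; case: (nth dummy_letter W 0) e1 e2 => a b /= <- e2.
  by case: b e2.
- move=> i k.
  case: (leqP (i + k) (size s.2)) => c1.
    rewrite drop_cat_le; last lia.
    rewrite take_cat_le; last by rewrite size_drop; lia.
    exact: s5 i k.
  case: (leqP i (size s.2)) => c2.
    rewrite drop_cat_le // take_cat size_drop.
    have -> : (k < size s.2 - i) = false by apply/negbTE; rewrite -leqNgt; lia.
    have -> : k - (size s.2 - i) = (k - (size s.2 - i)).-1.+1 by lia.
    rewrite /=; set k' := (k - (size s.2 - i)).-1; split.
    + rewrite all_cat /= => /andP [h1 h2] [_ _ _ hz].
      have HQ : forall y, List.In y (map fst (take k' W)) ->
          [/\ amor y = (KT, (atgt y).2), PD (atgt y) & 0 < (atgt y).2].
        by move=> y /In_map_fst [z [hz0 <-]]; exact: GR _ h2 z hz0.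
      have HP : forall x, List.In x (map fst (drop i s.2)) ->
          amor x = (KT, (asrc x).2) /\ PC (asrc x).
        by move=> y /In_map_fst [z [hz0 <-]]; exact: GL i h1 z hz0.
      have [e [pe _]] := pcomp_LR hB ha hm HQ HP HD.
      by move: hz; rewrite map_cat /= pe.
    + by rewrite all_cat /= andbF.
  rewrite drop_cat.
  have -> : (i < size s.2) = false by apply/negbTE; rewrite -leqNgt; lia.
  have -> : i - size s.2 = (i - size s.2).-1.+1 by lia.
  exact: w5.
Qed.

Lemma runL (good : obj -> Prop) v w :
  walk_from v w -> all snd w ->
  (forall x, List.In x w -> good (atgt x.1) -> amor x.1 = (KT, (asrc x.1).2) /\ good (asrc x.1)) ->
  good (last v (map ltgt w)) ->
  (forall x, List.In x w -> amor x.1 = (KT, (asrc x.1).2) /\ good (asrc x.1)) /\ good v.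
Proof.
elim: w v => [|x w IH] v //=.
case=> e hw /andP [hx hall] step hl.
have [H1 H2] := IH (ltgt x) hw hall (fun y hy => step y (or_intror hy)) hl.
have hs : lsrc x = asrc x.1 by rewrite /lsrc hx.
have ht : ltgt x = atgt x.1 by rewrite /ltgt hx.
have [s1 s2] := step x (or_introl erefl) (ltac:(by rewrite -ht)).
split; last by rewrite -e hs.
by move=> y [<-|hy]; [split | exact: H1].
Qed.

Lemma runR (good : obj -> Prop) v w :
  walk_from v w -> all snd w -> good v ->
  (forall x, List.In x w -> good (asrc x.1) -> amor x.1 = (KT, (atgt x.1).2) /\ good (atgt x.1)) ->
  (forall x, List.In x w -> amor x.1 = (KT, (atgt x.1).2) /\ good (atgt x.1)).
Proof.
elim: w v => [|x w IH] v //=.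
case=> e hw /andP [hx hall] gv step.
have hs : lsrc x = asrc x.1 by rewrite /lsrc hx.
have ht : ltgt x = atgt x.1 by rewrite /ltgt hx.
have [s1 s2] := step x (or_introl erefl) (ltac:(by rewrite -hs e)).
move=> y [<-|hy]; first by split.
exact: (IH (ltgt x) hw hall (ltac:(by rewrite ht)) (fun z hz => step z (or_intror hz)) y hy).
Qed.

Lemma arrow_ends v w x : walk_from v w -> uniq (v :: map ltgt w) -> List.In x w ->
  [/\ asrc x.1 \in v :: map ltgt w, atgt x.1 \in v :: map ltgt w & asrc x.1 <> atgt x.1].
Proof.
move=> hw hu hx.
have h1 := lsrc_mem hw hx; have h2 := ltgt_mem v hx; have h3 := noloop hw hu hx.
by case: x hx h1 h2 h3 => a [] /= _ h1 h2 h3; split => // E; apply: h3.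
Qed.

Lemma pair_eq (Y : obj) a b : Y.1 = a -> Y.2 = b -> Y = (a, b).
Proof. by case: Y => ? ? /= -> ->. Qed.

Lemma homD_one n C D : 2 <= n -> wing n C -> wing n D ->
  (D.1 = 1 /\ C.1 + C.2 = n) \/ (3 <= D.1 /\ C.1 + C.2 + 1 = D.1) -> homD_idx n D C 1.
Proof.
move=> n2 hC hD H; rewrite /homD_idx tau2E //; last by case: hD.
case: C hC H => a b; case: D hD => a' b' [/= h1 h2 h3] [/= h4 h5 h6] H.
rewrite /homT_idx /=.
case: H => [[-> e]|[e1 e2]].
  rewrite eqxx /=; apply/andP; split; first lia.
  by apply/eqP; congr (_ %% _); lia.
have -> : (a' == 1) = false by apply/eqP; lia.
have -> : (a' == 2) = false by apply/eqP; lia.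
apply/andP; split; first lia.
by apply/eqP; congr (_ %% _); lia.
Qed.

Lemma wingT1 n : 2 <= n -> wing n (1, n.-1).
Proof. move=> n2; split => /=; lia. Qed.

Lemma notirr_out n T C' : 2 <= n -> (1, n.-1) \in T -> wing n C' -> C' \in T ->
  C' <> (1, n.-1) -> C'.1 + C'.2 = n -> ~ irr_addT n T (1, n.-1) C' (KD, 1).
Proof.
move=> n2 T1 hC hCT ne e [_ _ _ H]; apply: H.
exists (1, n.-1), (KD, 1), (KT, C'.2); split => //.
- split; last by case.
  rewrite /valid_mor /=; apply: homD_one => //; try exact: wingT1.
  by left; split => //=; lia.
- split; last by case=> E _; apply: ne; rewrite -E.
  rewrite /valid_mor /=.
  have -> : C'.2 = (1, n.-1).1 + (1, n.-1).2 - C'.1 by rewrite /=; lia.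
  by case: hC => h1 h2 h3; apply: homT_intro => /=; lia.
- rewrite /Defs.comp addnK.
  have -> // : homD_idx n (1, n.-1) C' 1.
  apply: homD_one => //; try exact: wingT1.
  by left.
Qed.

Lemma notirr_in n T D' : 2 <= n -> (1, n.-1) \in T -> wing n D' -> D' \in T ->
  D' <> (1, n.-1) -> D'.1 = 1 -> ~ irr_addT n T D' (1, n.-1) (KD, 1).
Proof.
move=> n2 T1 hD hDT ne e [_ _ _ H]; apply: H.
exists (1, n.-1), (KT, D'.2), (KD, 1); split => //.
- split; last by case=> E _; apply: ne.
  rewrite /valid_mor /=.
  have -> : D'.2 = D'.1 + D'.2 - (1, n.-1).1 by rewrite /= e; lia.
  by case: hD => h1 h2 h3; apply: homT_intro => /=; lia.
- split; last by case.
  rewrite /valid_mor /=; apply: homD_one => //; try exact: wingT1.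
  by left; split => //=; lia.
- rewrite /Defs.comp addnK.
  have -> // : homD_idx n D' (1, n.-1) 1.
  apply: homD_one => //; try exact: wingT1.
  by left; split => //=; lia.
Qed.

Section Steps.
Variables (n : nat) (T : seq obj).
Hypotheses (n2 : 2 <= n) (wT : forall Y : obj, Y \in T -> wing n Y) (rT : rigid n T)
  (T1 : (1, n.-1) \in T).

Lemma sub_max (R : obj -> Prop) p (A Y : obj) :
  (forall Y : obj, Y \in T -> R Y -> Y.1 <= p < Y.1 + Y.2) ->
  A \in T -> R A -> (forall Y : obj, Y \in T -> R Y -> Y.2 <= A.2) ->
  Y \in T -> R Y -> A.1 <= Y.1 /\ Y.1 + Y.2 <= A.1 + A.2.
Proof.
move=> hp hA rA mA hY rY.
have := nest (rT hA hY) (wT hA) (wT hY) (hp _ hA rA) (hp _ hY rY).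
have := mA _ hY rY; lia.
Qed.

Lemma stepL (R : obj -> Prop) p (A C C' : obj) (f : mor) :
  (forall Y : obj, Y \in T -> R Y -> Y.1 <= p < Y.1 + Y.2) ->
  A \in T -> R A -> (forall Y : obj, Y \in T -> R Y -> Y.2 <= A.2) ->
  C \in T -> R C -> C' \in T -> R C' -> C <> C' -> C.1 + C.2 = A.1 + A.2 ->
  irr_addT n T C C' f -> f = (KT, C'.2) /\ C'.1 + C'.2 = A.1 + A.2.
Proof.
move=> hp hA rA mA hC rC hC' rC' ne eC hirr.
have [s1 s2] := sub_max hp hA rA mA hC' rC'.
have pC := hp _ hC rC; have pC' := hp _ hC' rC'.
have wC := wT hC; have wC' := wT hC'.
move: (hirr) => [_ _ [hv _] _].
case: f hirr hv => [[] m] hirr; rewrite /valid_mor /= => hv.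
  have [h1 h2 h3 h4] := homT_wing n2 wC wC' hv; split; [congr pair|]; lia.
have := homD_wing n2 wC wC' hv; case.
  move=> H; exfalso; apply: (cross_ext (rT hC hC')); split; lia.
move=> [e1 [e2 e3]]; subst m; exfalso.
have eA : A.1 + A.2 = n by case: (wT hA) => ? ? ?; lia.
have eC1 : C = (1, n.-1) by apply: pair_eq => //; lia.
subst C; apply: (notirr_out n2 T1 wC' hC' _ e2 hirr).
by move=> E; apply: ne.
Qed.

Lemma stepR (R : obj -> Prop) p (B D D' : obj) (f : mor) :
  (forall Y : obj, Y \in T -> R Y -> Y.1 <= p < Y.1 + Y.2) ->
  B \in T -> R B -> (forall Y : obj, Y \in T -> R Y -> Y.2 <= B.2) ->
  D \in T -> R D -> D' \in T -> R D' -> D <> D' -> D.1 = B.1 ->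
  irr_addT n T D' D f -> f = (KT, D'.2) /\ D'.1 = B.1.
Proof.
move=> hp hB rB mB hD rD hD' rD' ne eD hirr.
have [s1 s2] := sub_max hp hB rB mB hD' rD'.
have pD := hp _ hD rD; have pD' := hp _ hD' rD'.
have wD := wT hD; have wD' := wT hD'.
move: (hirr) => [_ _ [hv _] _].
case: f hirr hv => [[] m] hirr; rewrite /valid_mor /= => hv.
  have [h1 h2 h3 h4] := homT_wing n2 wD' wD hv; split; [congr pair|]; lia.
have := homD_wing n2 wD' wD hv; case.
  move=> H; exfalso; apply: (cross_ext (rT hD' hD)); split; lia.
move=> [e1 [e2 e3]]; subst m; exfalso.
have eD1 : D = (1, n.-1) by case: (wT hB) => ? ? ?; apply: pair_eq; lia.
subst D; apply: (notirr_in n2 T1 wD' hD' _ e1 hirr).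
by move=> E; apply: ne.
Qed.

End Steps.

Lemma obj_eq (Y Z : obj) : Y.1 = Z.1 -> Y.2 = Z.2 -> Y = Z.
Proof. by case: Y => ? ?; case: Z => ? ? /= -> ->. Qed.

Section Regime2.
Variables (n : nat) (T : seq obj) (x c : nat) (A B : obj).
Hypotheses (n2 : 2 <= n) (wT : forall Y : obj, Y \in T -> wing n Y) (rT : rigid n T)
  (vT : all (valid_obj n) T)
  (maxT : forall Z : seq obj, all (valid_obj n) Z -> rigid n (T ++ Z) -> all (fun Y => Y \in T) Z)
  (hx : 1 <= x) (hc : 1 <= c) (hs : x + c < n)
  (hA : A \in T) (hB : B \in T).
Definition RTp (Y : obj) := Y.1 <= x < Y.1 + Y.2 /\ Y.1 + Y.2 <= x + c.
Definition RDp (Y : obj) := x + 2 <= Y.1 <= x + c + 1 /\ x + c + 2 <= Y.1 + Y.2.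
Hypotheses (rA : RTp A) (rB : RDp B)
  (mA : forall Y : obj, Y \in T -> RTp Y -> Y.2 <= A.2)
  (mB : forall Y : obj, Y \in T -> RDp Y -> Y.2 <= B.2).

Lemma F3 : B.1 = A.1 + A.2 + 1.
Proof.
have wA := wT hA; have wB := wT hB.
move: rA rB; rewrite /RTp /RDp => rA' rB'.
case: (leqP B.1 (A.1 + A.2)) => c1.
  exfalso; apply: (cross_ext (rT hB hA)); split; lia.
case: (leqP B.1 (A.1 + A.2 + 1)) => c2; first lia.
exfalso.
set Z : obj := (A.1, B.1 - 1 - A.1).
have wZ : wing n Z by case: wA => ? ? ?; case: wB => ? ? ?; split => /=; lia.
have noc1 : forall Y : obj, Y \in T -> ~ cross Z Y.
  move=> Y hY [/= h1 h2 h3 h4].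
  have wY := wT hY.
  case: (leqP (A.1 + A.2) (Y.1 + Y.2)) => c3.
    have := mA hY; rewrite /RTp; lia.
  apply: (cross_ext (rT hA hY)); split; lia.
have noc2 : forall Y : obj, Y \in T -> ~ cross Y Z.
  move=> Y hY [/= h1 h2 h3 h4].
  have wY := wT hY.
  case: (leqP (B.1 + B.2) (Y.1 + Y.2)) => c3; last first.
    apply: (cross_ext (rT hB hY)); split; lia.
  case: (leqP (x + 2) Y.1) => c4.
    have := mB hY; rewrite /RDp; lia.
  apply: (cross_ext (rT hY hA)); split; lia.
have ZT : Z \in T.
  have := @maxT [:: Z]; rewrite /= !andbT; apply.
    by case: wZ => ? ? ?; rewrite /valid_obj; apply/andP; split; [apply/andP; split|]; lia.
  move=> Y1 Y2; rewrite !mem_cat !mem_seq1 => /orP [h1|/eqP ->] /orP [h2|/eqP ->].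
  - exact: rT.
  - apply: ext_intro => //; [exact: wT | exact: noc2 | exact: noc1].
  - apply: ext_intro => //; [exact: wT | exact: noc1 | exact: noc2].
  - apply: ext_intro => //; case=> /= ? ? ? ?; lia.
have := mA ZT; rewrite /RTp /=; case: wA => ? ? ?; lia.
Qed.

Lemma irr2 : ~ exists Z g h, [/\ Z \in T, rad_mor n B Z g, rad_mor n Z A h &
                                  Defs.comp n B Z A g h = Some (KD, 1)].
Proof.
have wA := wT hA; have wB := wT hB; have f3 := F3.
move: rA rB; rewrite /RTp /RDp => rA' rB'.
case=> Z [[kg ig] [[kh ih] [hZ [hg ng] [hh nh] hc']]].
have wZ := wT hZ.
move: hg hh; rewrite /valid_mor /=.
case: kg hc' ng => hc' ng; case: kh hc' nh => hc' nh hg hh //; rewrite /Defs.comp in hc'.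
- by move: hc'; case: ifP.
- have [h1 h2 h3 h4] := homT_wing n2 wB wZ hg.
  case: (homD_wing n2 wZ wA hh) => H; last lia.
  have ZB : Z = B.
    have := mB hZ; rewrite /RDp => H'.
    apply: obj_eq; lia.
  subst Z; apply: ng; split => //; congr pair; lia.
- case: (homD_wing n2 wB wZ hg) => H; last lia.
  have [h1 h2 h3 h4] := homT_wing n2 wZ wA hh.
  have ZA : Z = A.
    have := mA hZ; rewrite /RTp => H'.
    apply: obj_eq; lia.
  subst Z; apply: nh; split => //; congr pair; lia.
Qed.

End Regime2.

Lemma irr1 n (T : seq obj) : 2 <= n -> (forall Y : obj, Y \in T -> wing n Y) ->
  ~ exists Z g h, [/\ Z \in T, rad_mor n (1, n.-1) Z g, rad_mor n Z (1, n.-1) h &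
                     Defs.comp n (1, n.-1) Z (1, n.-1) g h = Some (KD, 1)].
Proof.
move=> n2 wT.
have w1 := wingT1 n2.
case=> Z [[kg ig] [[kh ih] [hZ [hg ng] [hh nh] hc']]].
have wZ := wT _ hZ.
move: hg hh; rewrite /valid_mor /=.
case: kg hc' ng => hc' ng; case: kh hc' nh => hc' nh hg hh //; rewrite /Defs.comp in hc'.
- by move: hc'; case: ifP.
- have [/= h1 h2 h3 h4] := homT_wing n2 w1 wZ hg.
  case: wZ => w1' w2' w3'.
  case: (homD_wing n2 (wT _ hZ) w1 hh) => /= H; first lia.
  have ZT : Z = (1, n.-1) by apply: pair_eq; lia.
  subst Z; apply: ng; split => //; congr pair; lia.
- case: (homD_wing n2 w1 wZ hg) => /= H; first lia.
  have [/= h1 h2 h3 h4] := homT_wing n2 wZ w1 hh.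
  case: wZ => w1' w2' w3'.
  have ZT : Z = (1, n.-1) by apply: pair_eq; lia.
  subst Z; apply: nh; split => //; congr pair; lia.
Qed.

Lemma In_drop (T0 : Type) (x : T0) i l : List.In x (drop i l) -> List.In x l.
Proof. by move=> h; rewrite -(cat_take_drop i l); apply/List.in_app_iff; right. Qed.

Lemma In_take (T0 : Type) (x : T0) i l : List.In x (take i l) -> List.In x l.
Proof. by move=> h; rewrite -(cat_take_drop i l); apply/List.in_app_iff; left. Qed.

Lemma finish n (T : seq obj) (R1 R2 : obj -> Prop) pt pd (sT sD : walk) :
  2 <= n -> (forall Y : obj, Y \in T -> wing n Y) -> rigid n T -> (1, n.-1) \in T ->
  is_sigma n T R1 sT -> is_sigma n T R2 sD ->
  (forall Y : obj, Y \in T -> R1 Y -> Y.1 <= pt < Y.1 + Y.2) ->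
  (forall Y : obj, Y \in T -> R2 Y -> Y.1 <= pd < Y.1 + Y.2) ->
  (~ exists Z g h, [/\ Z \in T, rad_mor n (wend sD) Z g, rad_mor n Z (wend sT) h &
        Defs.comp n (wend sD) Z (wend sT) g h = Some (KD, 1)]) ->
  (forall C D : obj, C \in T -> D \in T -> C.1 + C.2 = (wend sT).1 + (wend sT).2 ->
      D.1 = (wend sD).1 -> homD_idx n D C 1) ->
  (R1 (wend sD) -> wend sT <> wend sD -> False) ->
  (R2 (wend sT) -> wend sT <> wend sD -> False) ->
  let beta := Arrow (wend sT) (wend sD) (KD, 1) in
  is_Darrow n T beta /\ is_string n T (sT.1, sT.2 ++ (beta, true) :: (winv sD).2).
Proof.
move=> n2 wT rT T1 [sT1 sT2 sT3 sT4] [sD1 sD2 sD3 sD4] pT pD irr HD J1 J2 beta.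
set A := wend sT; set B := wend sD.
have Amem : A \in wverts sT := mem_last _ _.
have Bmem : B \in wverts sD := mem_last _ _.
have [AT RA] := (sT3 A).1 Amem.
have [BT RB] := (sD3 B).1 Bmem.
have hbeta : is_arrow n T beta.
  split => //; split; last by case.
  by rewrite /valid_mor /=; apply: HD.
split; first by split.
have [sw1 sw2 sw3 sw4 sw5] := sT1.
have sDw := is_string_winv sD1 BT.
have [_ dw2 dw3 dw4 dw5] := sDw.
apply: (concat_string (PC := fun C => C \in wverts sT /\ C.1 + C.2 = A.1 + A.2)
                      (PD := fun D => D \in wverts sD /\ D.1 = B.1) sT1 sDw hbeta erefl erefl erefl).
- move=> hin; have [e1 e2 e3] := arrow_ends sw2 sT2 hin.
  by apply: J1; [exact: ((sT3 B).1 e2).2 | exact: e3].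
- move=> hin; have [y [/In_rev hy ey]] := In_map_flip (l := rev sD.2) hin.
  have ey' : y = (beta, true) by case: y hy ey => a [] hy [-> ].
  have [_ dsw2 _ _ _] := sD1.
  subst y; have [e1 e2 e3] := arrow_ends dsw2 sD2 hy.
  by apply: J2; [exact: ((sD3 A).1 e1).2 | exact: e3].
- move=> i hall x hx.
  pose v := last sT.1 (map ltgt (take i sT.2)).
  have hw : walk_from v (drop i sT.2).
    by move: sw2; rewrite -{1}(cat_take_drop i sT.2) walk_cat => -[].
  have hl : last v (map ltgt (drop i sT.2)) = A.
    by rewrite /v -last_cat -map_cat cat_take_drop.
  have step : forall y, List.In y (drop i sT.2) ->
      (atgt y.1 \in wverts sT /\ (atgt y.1).1 + (atgt y.1).2 = A.1 + A.2) ->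
      amor y.1 = (KT, (asrc y.1).2) /\
      (asrc y.1 \in wverts sT /\ (asrc y.1).1 + (asrc y.1).2 = A.1 + A.2).
    move=> y hy hg.
    have hy' := In_drop hy.
    have [e1 e2 e3] := arrow_ends sw2 sT2 hy'.
    have [C1 C2] := (sT3 _).1 e1.
    have [C3 C4] := (sT3 _).1 e2.
    have [k1 k2] := stepL n2 wT rT T1 pT AT RA sT4 C3 C4 C1 C2 (fun E => e3 (esym E)) hg.2
                     (sw3 _ hy').
    by rewrite k1; split.
  have [H _] := runL (good := fun C => C \in wverts sT /\ C.1 + C.2 = A.1 + A.2) hw hall
    step (ltac:(by rewrite hl; split)).
  exact: H.
- move=> k hall y hy.
  have [_ dsw2 dsw3 _ _] := sD1.
  have dw2' : walk_from B (map flip (rev sD.2)) := dw2.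
  have hw : walk_from B (take k (map flip (rev sD.2))).
    by move: dw2'; rewrite -{1}(cat_take_drop k (map flip (rev sD.2))) walk_cat => -[].
  have step : forall z, List.In z (take k (map flip (rev sD.2))) ->
      (asrc z.1 \in wverts sD /\ (asrc z.1).1 = B.1) ->
      amor z.1 = (KT, (atgt z.1).2) /\ (atgt z.1 \in wverts sD /\ (atgt z.1).1 = B.1).
    move=> z hz hg.
    have [w [/In_rev hw' ez]] := In_map_flip (In_take hz); subst z.
    have [e1 e2 e3] := arrow_ends dsw2 sD2 hw'.
    have [C1 C2] := (sD3 _).1 e1.
    have [C3 C4] := (sD3 _).1 e2.
    have [k1 k2] := stepR n2 wT rT T1 pD BT RB sD4 C1 C2 C3 C4 e3 hg.2 (dsw3 _ hw').
    by rewrite /= k1; split.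
  have H := runR (good := fun D => D \in wverts sD /\ D.1 = B.1) hw hall
    (ltac:(by split)) step.
  have [H1 [H2 H3]] := H y hy.
  split => //; by case: (wT _ ((sD3 _).1 H2).1).
- move=> D C hD hC.
  have DT : D \in T /\ D.1 = B.1.
    by case: hD => [->|[h1 h2]]; [split | split => //; exact: ((sD3 _).1 h1).1].
  have CT : C \in T /\ C.1 + C.2 = A.1 + A.2.
    by case: hC => [->|[h1 h2]]; [split | split => //; exact: ((sT3 _).1 h1).1].
  by apply: HD; [exact: CT.1 | exact: DT.1 | exact: CT.2 | exact: DT.2].
Qed.

Unset Implicit Arguments.

Theorem lemma4p7 (n : nat) (T : seq obj) (X : obj) (sT sD : walk) :
  2 <= n ->
  basic_maximal_rigid n T ->
  (1, n.-1) \in T ->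
  inF n X ->
  is_sigma n T (inRT n X) sT ->
  is_sigma n T (inRD n X) sD ->
  exists beta : arrow,
    [/\ is_Darrow n T beta, asrc beta = wend sT, atgt beta = wend sD &
        is_string n T (sT.1, sT.2 ++ (beta, true) :: (winv sD).2)].
Proof.
move=> n2 [hsz huq hv hr hmax] T1 [hXv hXF] sigT sigD.
have wT : forall Y : obj, Y \in T -> wing n Y := fun Y hY => wing_T n2 T1 hv hr hY.
case: X hXv hXF sigT sigD => x c hXv hXF sigT sigD.
have [hx1 hxn hc hF] : [/\ 1 <= x, x <= n, 0 < c & x + c < 2 * n].
  move: hXv; rewrite /valid_obj /= => /andP [/andP [? ?] ?]; split => //; case: hXF => /=; lia.
have [sT1 sT2 sT3 sT4] := sigT.
have [sD1 sD2 sD3 sD4] := sigD.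
set A := wend sT; set B := wend sD.
have [AT RA] := (sT3 A).1 (mem_last _ _).
have [BT RB] := (sD3 B).1 (mem_last _ _).
have wA := wT _ AT; have wB := wT _ BT.
have RTi : forall Y : obj, Y \in T -> inRT n (x, c) Y <->
    (Y.1 <= x < Y.1 + Y.2 /\ Y.1 + Y.2 <= x + c).
  by move=> Y hY; apply: inRT_iff => //=; [exact: wT | lia | lia].
have pT : forall Y : obj, Y \in T -> inRT n (x, c) Y -> Y.1 <= x < Y.1 + Y.2.
  by move=> Y hY /(RTi _ hY) [].
have RA' := (RTi _ AT).1 RA.
have xn : x < n by case: wA => ? ? ?; lia.
suff [beta [H1 H2 H3 H4]] : exists beta : arrow,
    [/\ is_Darrow n T beta, asrc beta = A, atgt beta = B &
        is_string n T (sT.1, sT.2 ++ (beta, true) :: (winv sD).2)].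
  by exists beta.
case: (ltnP (x + c) n) => reg.
-
  have RDi : forall Y : obj, Y \in T -> inRD n (x, c) Y <->
      (x + 2 <= Y.1 <= x + c + 1 /\ x + c + 2 <= Y.1 + Y.2).
    by move=> Y hY; apply: inRD_iff2 => //=; exact: wT.
  have pD : forall Y : obj, Y \in T -> inRD n (x, c) Y -> Y.1 <= x + c + 1 < Y.1 + Y.2.
    by move=> Y hY /(RDi _ hY); lia.
  have RB' := (RDi _ BT).1 RB.
  have mA : forall Y : obj, Y \in T -> RTp x c Y -> Y.2 <= A.2.
    by move=> Y hY hR; apply: sT4 => //; apply/(RTi _ hY).
  have mB : forall Y : obj, Y \in T -> RDp x c Y -> Y.2 <= B.2.
    by move=> Y hY hR; apply: sD4 => //; apply/(RDi _ hY).
  have f3 := F3 n2 wT hr hv hmax hx1 hc reg AT BT RA' RB' mA mB.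
  have ir := irr2 n2 wT hr hv hmax hx1 hc reg AT BT RA' RB' mA mB.
  have HD : forall C D : obj, C \in T -> D \in T -> C.1 + C.2 = A.1 + A.2 ->
      D.1 = B.1 -> homD_idx n D C 1.
    move=> C D hC hD eC eD; apply: homD_one n2 (wT _ hC) (wT _ hD) _.
    right; rewrite eC eD; lia.
  have J1 : inRT n (x, c) B -> A <> B -> False.
    by move=> h _; have := (RTi _ BT).1 h; lia.
  have J2 : inRD n (x, c) A -> A <> B -> False.
    by move=> h _; have := (RDi _ AT).1 h; lia.
  have [K1 K2] := finish n2 wT hr T1 sigT sigD pT pD ir HD J1 J2.
  by eexists; split; [exact: K1 | | | exact: K2].
-
  have eA : A = (1, n.-1).
    have h1 : inRT n (x, c) (1, n.-1) by apply/(RTi _ T1) => /=; lia.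
    have := sT4 _ T1 h1; rewrite -/A; case: wA => ? ? ? /= ?; apply: pair_eq; lia.
  have pD : forall Y : obj, Y \in T -> inRD n (x, c) Y -> Y.1 <= x + c - n + 1 < Y.1 + Y.2.
    by move=> Y hY; apply: inRD_fwd1 => //=; [exact: wT | lia].
  have eB : B = (1, n.-1).
    have := pD _ BT RB; case: wB => ? ? ? ?.
    have h1 : inRD n (x, c) (1, n.-1) by apply: inRD_T1 => /=; lia.
    have := sD4 _ T1 h1; rewrite -/B /= => ?; apply: pair_eq; lia.
  have ir : ~ exists Z g h, [/\ Z \in T, rad_mor n B Z g, rad_mor n Z A h &
        Defs.comp n B Z A g h = Some (KD, 1)].
    by rewrite eA eB; apply: irr1 n2 wT.
  have HD : forall C D : obj, C \in T -> D \in T -> C.1 + C.2 = A.1 + A.2 ->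
      D.1 = B.1 -> homD_idx n D C 1.
    move=> C D hC hD eC eD; apply: homD_one n2 (wT _ hC) (wT _ hD) _.
    left; rewrite eC eD eA eB /=; split => //; lia.
  have J : A <> B -> False by rewrite eA eB.
  have [K1 K2] := finish n2 wT hr T1 sigT sigD pT pD ir HD
    (fun _ => J) (fun _ => J).
  by eexists; split; [exact: K1 | | | exact: K2].
Qed.
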